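(* Let $G$ be a countable group, equipped with a proper left-invariant metric, which is not locally finite. Suppose $E_1,E_2,E_3$ are pairwise disjoint NCC subsets of $G$. Then $G$ acts trivially on at most one of $E_1,E_2,E_3$.
   Context: A group is locally finite if every finite subset is contained in a finite subgroup. A subset $A$ of a metric space $X$ is coarsely clopen if for all $r>0$ there is a bounded $K$ such that no $x\in A\setminus K$, $y\in (X\setminus A)\setminus K$ satisfy $d(x,y)<r$. An NCC set (non-trivial coarsely clopen set) is a coarsely clopen $Y\subset X$ with both $Y$ and $X\setminus Y$ infinite (in a group with proper metric: unbounded). $G$ acts trivially on an NCC set $E\subset G$ if the symmetric difference $E\,\Delta\,(g\cdot E)$ is finite for every $g\in G$. *)

(* Defs.v *)
From Stdlib Require Import Reals List.
Open Scope R_scope.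

Section Defs.
Context {G : Type}.

Definition is_group (mul : G -> G -> G) (inv : G -> G) (one : G) : Prop :=
  (forall x y z, mul x (mul y z) = mul (mul x y) z) /\
  (forall x, mul one x = x) /\ (forall x, mul x one = x) /\
  (forall x, mul (inv x) x = one) /\ (forall x, mul x (inv x) = one).

Definition countable_type : Prop :=
  exists f : G -> nat, forall x y, f x = f y -> x = y.

Definition finite_set (A : G -> Prop) : Prop :=
  exists l : list G, forall x, A x -> In x l.

Definition infinite_set (A : G -> Prop) : Prop := ~ finite_set A.

Definition is_metric (d : G -> G -> R) : Prop :=
  (forall x y, 0 <= d x y) /\
  (forall x y, d x y = 0 <-> x = y) /\
  (forall x y, d x y = d y x) /\
  (forall x y z, d x z <= d x y + d y z).

Definition left_invariant (mul : G -> G -> G) (d : G -> G -> R) : Prop :=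
  forall g x y, d (mul g x) (mul g y) = d x y.

Definition proper_metric (d : G -> G -> R) : Prop :=
  forall x r, finite_set (fun y => d x y <= r).

Definition bounded (d : G -> G -> R) (K : G -> Prop) : Prop :=
  exists x0 r, forall k, K k -> d x0 k <= r.

Definition is_subgroup (mul : G -> G -> G) (inv : G -> G) (one : G)
  (H : G -> Prop) : Prop :=
  H one /\ (forall x y, H x -> H y -> H (mul x y)) /\ (forall x, H x -> H (inv x)).

Definition locally_finite (mul : G -> G -> G) (inv : G -> G) (one : G) : Prop :=
  forall l : list G, exists H : G -> Prop,
    is_subgroup mul inv one H /\ finite_set H /\ (forall x, In x l -> H x).

Definition coarsely_clopen (d : G -> G -> R) (A : G -> Prop) : Prop :=
  forall r, 0 < r -> exists K : G -> Prop, bounded d K /\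
    forall x y, A x -> ~ K x -> ~ A y -> ~ K y -> ~ (d x y < r).

Definition NCC (d : G -> G -> R) (Y : G -> Prop) : Prop :=
  coarsely_clopen d Y /\ infinite_set Y /\ infinite_set (fun x => ~ Y x).

(* g . E = { g e | e in E } = { x | g^-1 x in E } *)
Definition translate (mul : G -> G -> G) (inv : G -> G) (g : G) (E : G -> Prop)
  : G -> Prop := fun x => E (mul (inv g) x).

Definition symdiff (A B : G -> Prop) : G -> Prop :=
  fun x => (A x /\ ~ B x) \/ (B x /\ ~ A x).

Definition acts_trivially (mul : G -> G -> G) (inv : G -> G) (E : G -> Prop) : Prop :=
  forall g, finite_set (symdiff E (translate mul inv g E)).

End Defs.

(* Main.v *)
Require Import Defs.
From Stdlib Require Import Reals List Lia Lra Classical.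
Open Scope R_scope.

Lemma fin_sub {G : Type} (A B : G -> Prop) :
  finite_set B -> (forall x, A x -> B x) -> finite_set A.
Proof. intros [l Hl] H. exists l. intros x Ax. apply Hl, H, Ax. Qed.

Lemma fin_union {G : Type} (A B : G -> Prop) :
  finite_set A -> finite_set B -> finite_set (fun x => A x \/ B x).
Proof.
  intros [l1 H1] [l2 H2]. exists (l1 ++ l2). intros x [Ax|Bx];
  apply in_or_app; [left; auto | right; auto].
Qed.

Lemma inf_diff {G : Type} (A B : G -> Prop) :
  infinite_set A -> finite_set B -> exists x, A x /\ ~ B x.
Proof.
  intros HA HB. apply NNPP. intros Hn. apply HA.
  apply (fin_sub A B HB). intros x Ax. apply NNPP. intros nB. apply Hn. eauto.
Qed.

Lemma fin_image {G : Type} (A : G -> Prop) (f : G -> G) :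
  finite_set A -> finite_set (fun y => exists x, A x /\ y = f x).
Proof.
  intros [l Hl]. exists (map f l). intros y [x [Ax ->]]. apply in_map, Hl, Ax.
Qed.

Lemma fin_family {G T : Type} (L : list T) (P : T -> G -> Prop) :
  (forall k, In k L -> finite_set (P k)) ->
  finite_set (fun x => exists k, In k L /\ P k x).
Proof.
  induction L as [|a L IH]; intros H.
  - exists nil. intros x [k [[] _]].
  - destruct (H a (or_introl eq_refl)) as [la Ha].
    destruct IH as [lb Hb]. { intros k Hk. apply H. right; exact Hk. }
    exists (la ++ lb). intros x [k [[<-|Hk] Pk]]; apply in_or_app.
    + left; auto.
    + right; apply Hb; eauto.
Qed.

Lemma min_nat (P : nat -> Prop) : (exists n, P n) -> exists n, P n /\ forall m, P m -> (n <= m)%nat.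
Proof.
  intros [n Hn]. revert Hn. induction n as [n IH] using (well_founded_induction Wf_nat.lt_wf).
  intros Hn. destruct (classic (exists m, (m < n)%nat /\ P m)) as [[m [Hm Pm]]|Hno].
  - exact (IH m Hm Pm).
  - exists n. split; auto. intros m Pm. destruct (Nat.lt_ge_cases m n); auto.
    exfalso; eauto.
Qed.


Lemma grp_facts {G : Type} (mul : G -> G -> G) (inv : G -> G) (one : G) :
  is_group mul inv one ->
  (forall x, inv (inv x) = x) /\
  (forall g x, mul (inv g) (mul g x) = x) /\
  (forall g x, mul g (mul (inv g) x) = x) /\
  (forall x g, mul (mul x g) (inv g) = x) /\
  (forall x g, mul (mul x (inv g)) g = x).
Proof.
  intros [As [L1 [R1 [Li Ri]]]].
  assert (II : forall x, inv (inv x) = x).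
  { intros x. rewrite <- (R1 (inv (inv x))), <- (Li x), As, Li, L1. reflexivity. }
  split; [exact II|].
  split; [intros; rewrite As, Li, L1; reflexivity|].
  split; [intros; rewrite As, Ri, L1; reflexivity|].
  split; [intros; rewrite <- As, Ri, R1; reflexivity|].
  intros; rewrite <- As, Li, R1; reflexivity.
Qed.

Definition sumd {G : Type} (d : G -> G -> R) (one : G) (T : list G) : R :=
  fold_right (fun s acc => d one s + acc) 0 T.

Lemma sumd_ge {G : Type} (d : G -> G -> R) (one : G) (T : list G) :
  is_metric d -> 0 <= sumd d one T /\ forall s, In s T -> d one s <= sumd d one T.
Proof.
  intros [Hnn _]. induction T as [|a T [IH1 IH2]]; simpl.
  - split; [lra | intros s []].
  - split. + specialize (Hnn one a). lra.
    + intros s [<-|Hs]. * lra. * specialize (IH2 s Hs). specialize (Hnn one a). lra.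
Qed.

Lemma bnd_list {G : Type} (mul : G -> G -> G) (inv : G -> G) (one : G) (d : G -> G -> R)
  (P : G -> Prop) (T : list G) :
  is_group mul inv one -> is_metric d -> left_invariant mul d -> proper_metric d ->
  coarsely_clopen d P ->
  exists L : list G, forall x s, In s T -> ~ In x L -> ~ In (mul x s) L -> (P x <-> P (mul x s)).
Proof.
  intros Hg Hm Hl Hp Hc.
  destruct (sumd_ge d one T Hm) as [S0 Ss].
  destruct (Hc (sumd d one T + 1)) as [K [[x0 [r0 Hb]] HK]]; [lra|].
  destruct (Hp x0 r0) as [L HL].
  exists L. intros x s Hs nx nxs.
  assert (Kx : ~ K x) by (intros Kx0; apply nx, HL, Hb, Kx0).
  assert (Kxs : ~ K (mul x s)) by (intros Kx0; apply nxs, HL, Hb, Kx0).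
  assert (Hd : d x (mul x s) < sumd d one T + 1).
  { destruct Hg as [_ [_ [R1 _]]]. rewrite <- (R1 x) at 1. rewrite Hl.
    specialize (Ss s Hs). lra. }
  destruct Hm as [_ [_ [Hsym _]]].
  split; intros H; apply NNPP; intros H'.
  - exact (HK x (mul x s) H Kx H' Kxs Hd).
  - rewrite Hsym in Hd. exact (HK (mul x s) x H Kxs H' Kx Hd).
Qed.

Lemma right_inv {G : Type} (mul : G -> G -> G) (inv : G -> G) (one : G) (d : G -> G -> R)
  (P : G -> Prop) (g : G) :
  is_group mul inv one -> is_metric d -> left_invariant mul d -> proper_metric d ->
  coarsely_clopen d P -> finite_set (fun x => P x /\ ~ P (mul x g)).
Proof.
  intros Hg Hm Hl Hp Hc.
  destruct (bnd_list mul inv one d P (g :: nil) Hg Hm Hl Hp Hc) as [L HL].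
  destruct (grp_facts mul inv one Hg) as [_ [_ [_ [K1 _]]]].
  exists (L ++ map (fun y => mul y (inv g)) L).
  intros x [Px nPx]. apply in_or_app.
  destruct (classic (In x L)) as [Hx|Hx]; [left; exact Hx|].
  destruct (classic (In (mul x g) L)) as [Hxg|Hxg].
  - right. apply (in_map (fun y => mul y (inv g))) in Hxg. rewrite K1 in Hxg. exact Hxg.
  - exfalso. apply nPx. apply (HL x g (or_introl eq_refl) Hx Hxg), Px.
Qed.

Lemma inv_mul {G : Type} (mul : G -> G -> G) (inv : G -> G) (one : G) :
  is_group mul inv one -> forall x y, inv (mul x y) = mul (inv y) (inv x).
Proof.
  intros Hg x y. destruct (grp_facts mul inv one Hg) as [_ [F1 [_ [F3 _]]]].
  destruct Hg as [As [L1 [R1 [Li Ri]]]].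
  rewrite <- (F3 (inv (mul x y)) x).
  rewrite <- (F3 (mul (inv (mul x y)) x) y).
  rewrite <- (As _ x y), Li, L1. reflexivity.
Qed.

Inductive Lw {G : Type} (mul : G -> G -> G) (one : G) (SS : list G) : nat -> G -> Prop :=
| Lw0 : Lw mul one SS 0 one
| LwS : forall n x s, Lw mul one SS n x -> In s SS -> Lw mul one SS (S n) (mul x s).

Definition Hm {G : Type} (mul : G -> G -> G) (one : G) (SS : list G) (x : G) : Prop :=
  exists n, Lw mul one SS n x.

Lemma Lw_fin {G : Type} (mul : G -> G -> G) (one : G) (SS : list G) n :
  finite_set (Lw mul one SS n).
Proof.
  induction n as [|n [l Hl]].
  - exists (one :: nil). intros x H. inversion H; subst. left; reflexivity.
  - exists (flat_map (fun y => map (mul y) SS) l). intros x H. inversion H; subst.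
    apply in_flat_map. exists x0. split; [apply Hl; assumption | apply in_map; assumption].
Qed.

Lemma ball_fin {G : Type} (mul : G -> G -> G) (one : G) (SS : list G) R :
  finite_set (fun x => exists m, (m <= R)%nat /\ Lw mul one SS m x).
Proof.
  induction R as [|R IH].
  - apply (fin_sub _ _ (Lw_fin mul one SS 0)). intros x [m [Hm Hx]].
    assert (m = 0%nat) by lia. subst. exact Hx.
  - apply (fin_sub _ _ (fin_union _ _ IH (Lw_fin mul one SS (S R)))).
    intros x [m [Hm Hx]]. destruct (Nat.eq_dec m (S R)) as [->|Hne].
    + right; exact Hx.
    + left. exists m. split; [lia | exact Hx].
Qed.

Lemma Lw_mul {G : Type} (mul : G -> G -> G) (inv : G -> G) (one : G) (SS : list G) :
  is_group mul inv one -> forall m y, Lw mul one SS m y -> forall n x, Lw mul one SS n x ->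
  Lw mul one SS (n + m) (mul x y).
Proof.
  intros [As [L1 [R1 _]]] m y Hy. induction Hy as [|m y s Hy IH Hs]; intros n x Hx.
  - rewrite R1, Nat.add_0_r. exact Hx.
  - rewrite As, Nat.add_succ_r. constructor; auto.
Qed.

Lemma Hm_mul {G : Type} (mul : G -> G -> G) (inv : G -> G) (one : G) (SS : list G) :
  is_group mul inv one -> forall x y, Hm mul one SS x -> Hm mul one SS y -> Hm mul one SS (mul x y).
Proof.
  intros Hg x y [n Hx] [m Hy]. exists (n + m)%nat. eapply Lw_mul; eauto.
Qed.

Lemma Hm_gen {G : Type} (mul : G -> G -> G) (inv : G -> G) (one : G) (SS : list G) :
  is_group mul inv one -> forall s, In s SS -> Hm mul one SS s.
Proof.
  intros [As [L1 _]] s Hs. exists 1%nat. rewrite <- (L1 s). constructor; [constructor|exact Hs].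
Qed.

Lemma Hm_inv {G : Type} (mul : G -> G -> G) (inv : G -> G) (one : G) (SS : list G) :
  is_group mul inv one -> (forall s, In s SS -> In (inv s) SS) ->
  forall x, Hm mul one SS x -> Hm mul one SS (inv x).
Proof.
  intros Hg Hcl x [n Hx]. induction Hx as [|n x s Hx IH Hs].
  - exists 0%nat. destruct Hg as [_ [_ [R1 [Li _]]]].
    rewrite <- (R1 (inv one)), Li. constructor.
  - rewrite (inv_mul mul inv one Hg). apply (Hm_mul mul inv one); auto.
    apply (Hm_gen mul inv one); auto.
Qed.

Lemma H_inf {G : Type} (mul : G -> G -> G) (inv : G -> G) (one : G) :
  is_group mul inv one -> ~ locally_finite mul inv one ->
  exists SS : list G, (forall s, In s SS -> In (inv s) SS) /\ infinite_set (Hm mul one SS).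
Proof.
  intros Hg Hnlf. apply not_all_ex_not in Hnlf. destruct Hnlf as [l Hl].
  destruct (grp_facts mul inv one Hg) as [II _].
  exists (l ++ map inv l). split.
  - intros s Hs. apply in_app_or in Hs. apply in_or_app. destruct Hs as [Hs|Hs].
    + right. apply in_map, Hs.
    + left. apply in_map_iff in Hs. destruct Hs as [a [<- Ha]]. rewrite II. exact Ha.
  - intros Hfin. apply Hl. exists (Hm mul one (l ++ map inv l)). split; [|split; [exact Hfin|]].
    + split; [exists 0%nat; constructor|]. split.
      * apply (Hm_mul mul inv one); auto.
      * apply (Hm_inv mul inv one); auto.
        intros s Hs. apply in_app_or in Hs. apply in_or_app. destruct Hs as [Hs|Hs].
        -- right. apply in_map, Hs.
        -- left. apply in_map_iff in Hs. destruct Hs as [a [<- Ha]]. rewrite II. exact Ha.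
    + intros x Hx. apply (Hm_gen mul inv one); auto. apply in_or_app; left; exact Hx.
Qed.

Lemma walk {G : Type} (mul : G -> G -> G) (inv : G -> G) (one : G) (SS L : list G) (Q : G -> Prop) :
  is_group mul inv one ->
  (forall x s, In s SS -> ~ In x L -> ~ In (mul x s) L -> (Q x <-> Q (mul x s))) ->
  forall p n y, Lw mul one SS n y -> Q p -> ~ Q (mul p y) ->
  exists z, Hm mul one SS z /\ In (mul p z) L.
Proof.
  intros Hg HB p n y Hy. pose proof Hg as [As [L1 [R1 _]]].
  induction Hy as [|n y s Hy IH Hs]; intros Qp nQ.
  - rewrite R1 in nQ. contradiction.
  - destruct (classic (Q (mul p y))) as [Qy|nQy]; [|apply IH; auto].
    destruct (classic (In (mul p y) L)) as [I1|I1]; [exists y; split; [exists n; exact Hy|exact I1]|].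
    destruct (classic (In (mul p (mul y s)) L)) as [I2|I2].
    + exists (mul y s). split; [exists (S n); constructor; auto | exact I2].
    + exfalso. apply nQ. rewrite As. rewrite As in I2. apply (HB _ s Hs I1 I2), Qy.
Qed.

Lemma part1 {G : Type} (mul : G -> G -> G) (inv : G -> G) (one : G) (SS L : list G) (Q : G -> Prop) :
  is_group mul inv one -> (forall s, In s SS -> In (inv s) SS) ->
  infinite_set (Hm mul one SS) ->
  (forall x s, In s SS -> ~ In x L -> ~ In (mul x s) L -> (Q x <-> Q (mul x s))) ->
  (forall p, finite_set (fun x => Q (mul p x) /\ ~ Q x)) ->
  infinite_set Q ->
  infinite_set (fun x => Hm mul one SS x /\ Q x).
Proof.
  intros Hg Hcl Hinf HB HL HQ [M HM].
  destruct (grp_facts mul inv one Hg) as [_ [_ [_ [F3 _]]]].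
  assert (Hp : forall p, finite_set (fun y => Hm mul one SS y /\ Q (mul p y))).
  { intros p. apply (fin_sub _ _ (fin_union _ _ (HL p) (ex_intro _ M HM))).
    intros y [Hy Qy]. destruct (classic (Q y)); [right; auto | left; auto]. }
  apply HQ.
  apply (fin_sub _ _ (fin_family L (fun k x => exists w, (Hm mul one SS w /\ Q (mul k w)) /\ x = mul k w)
    (fun k _ => fin_image _ (mul k) (Hp k)))).
  intros p Qp.
  destruct (inf_diff _ _ Hinf (Hp p)) as [y [Hy nH]].
  assert (nQ : ~ Q (mul p y)) by (intros Q'; apply nH; auto).
  destruct Hy as [n Hy].
  destruct (walk mul inv one SS L Q Hg HB p n y Hy Qp nQ) as [z [Hz Iz]].
  exists (mul p z). split; [exact Iz|]. exists (inv z).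
  rewrite F3. split; [split; [apply (Hm_inv mul inv one); auto | exact Qp] | reflexivity].
Qed.

Lemma len_bound {G : Type} (mul : G -> G -> G) (one : G) (SS : list G) (L : list G) :
  exists R, forall k, In k L -> Hm mul one SS k -> exists m, (m <= R)%nat /\ Lw mul one SS m k.
Proof.
  induction L as [|a L [R IH]].
  - exists 0%nat. intros k [].
  - destruct (classic (Hm mul one SS a)) as [[na Ha]|Na].
    + exists (R + na)%nat. intros k [<-|Hk] Hk'.
      * exists na. split; [lia|exact Ha].
      * destruct (IH k Hk Hk') as [m [Hm1 Hm2]]. exists m. split; [lia|exact Hm2].
    + exists R. intros k [<-|Hk] Hk'; [contradiction|]. apply IH; auto.
Qed.

Lemma part2 {G : Type} (mul : G -> G -> G) (inv : G -> G) (one : G) (SS L : list G) (A B : G -> Prop) :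
  is_group mul inv one ->
  (forall x, A x -> B x -> False) ->
  (forall x s, In s SS -> ~ In x L -> ~ In (mul x s) L -> (A x <-> A (mul x s))) ->
  (forall x s, In s SS -> ~ In x L -> ~ In (mul x s) L -> (B x <-> B (mul x s))) ->
  (forall k, finite_set (fun x => A x /\ ~ A (mul x k))) ->
  (forall g, finite_set (fun x => A (mul g x) /\ ~ A x)) ->
  (forall g, finite_set (fun x => B (mul g x) /\ ~ B x)) ->
  (forall g, finite_set (fun x => B x /\ ~ B (mul g x))) ->
  infinite_set (fun x => Hm mul one SS x /\ A x) ->
  infinite_set (fun x => Hm mul one SS x /\ B x) ->
  infinite_set (fun x => Hm mul one SS x /\ (~ A x /\ ~ B x)) ->
  False.
Proof.
  intros Hg Dis BA BB RA LA LB LB' IA IB IC.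
  destruct (grp_facts mul inv one Hg) as [II [F1 [F2 [F3 F4]]]].
  pose proof Hg as [As [L1 [R1 _]]].
  destruct (len_bound mul one SS L) as [R HR].
  set (F := fun x => exists m, (m <= R)%nat /\ Lw mul one SS m x).
  assert (FF : finite_set F) by apply ball_fin.
  assert (Fbad : finite_set (fun h => exists k, In k L /\ ((A h /\ ~ A (mul h k)) \/ F (mul h k)))).
  { apply (fin_sub _ _ (fin_family L (fun k h => (A h /\ ~ A (mul h k)) \/ exists z, F z /\ h = mul z (inv k))
      (fun k _ => fin_union _ _ (RA k) (fin_image _ _ FF)))).
    intros h [k [Hk H]]. exists k. split; auto. destruct H as [H|H]; [left; auto|].
    right. exists (mul h k). split; [exact H | rewrite F3; reflexivity]. }
  destruct (inf_diff _ _ IA Fbad) as [h [[Hh Ah] Hbad]].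
  assert (Hgood : forall k, In k L -> A (mul h k) /\ ~ F (mul h k)).
  { intros k Hk. split.
    - apply NNPP. intros nA. apply Hbad. exists k. split; auto.
    - intros HF. apply Hbad. exists k. split; auto. }
  set (hi := inv h).
  assert (NL : forall y, F y \/ ~ A y -> ~ In (mul hi y) L).
  { intros y Hy Hin. destruct (Hgood _ Hin) as [G1 G2]. unfold hi in G1, G2. rewrite F2 in G1, G2.
    destruct Hy; contradiction. }
  assert (Claim : forall n x, Lw mul one SS n x -> (forall m, Lw mul one SS m x -> (n <= m)%nat) ->
      F x \/ ~ A x -> (A (mul hi x) <-> A hi) /\ (B (mul hi x) <-> B hi)).
  { induction n as [|n IH]; intros x Hx Hmin Hx2.
    - inversion Hx; subst. rewrite R1. tauto.
    - inversion Hx as [|n' y s Hy Hs]; subst.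
      assert (Hminy : forall m, Lw mul one SS m y -> (n <= m)%nat).
      { intros m Hm'. specialize (Hmin (S m) (LwS _ _ _ _ _ _ Hm' Hs)). lia. }
      assert (Hy2 : F y \/ ~ A y).
      { destruct (classic (F y)) as [Fy|nFy]; [left; exact Fy|right; intros Ay].
        assert (nFx : ~ F (mul y s)).
        { intros [m [Hm1 Hm2]]. specialize (Hmin m Hm2). apply nFy. exists n. split; [lia|exact Hy]. }
        assert (nAx : ~ A (mul y s)) by (destruct Hx2; tauto).
        assert (nLy : ~ In y L).
        { intros I. destruct (HR y I (ex_intro _ n Hy)) as [m [Hm1 Hm2]]. apply nFy. exists m; auto. }
        assert (nLx : ~ In (mul y s) L).
        { intros I. destruct (HR _ I (ex_intro _ (S n) Hx)) as [m [Hm1 Hm2]]. apply nFx. exists m; auto. }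
        apply nAx. apply (BA y s Hs nLy nLx), Ay. }
      destruct (IH y Hy Hminy Hy2) as [IH1 IH2].
      pose proof (NL y Hy2) as N1. pose proof (NL _ Hx2) as N2. rewrite As in N2.
      rewrite As. rewrite <- (BA _ s Hs N1 N2), <- (BB _ s Hs N1 N2). tauto. }
  assert (Claim' : forall x, Hm mul one SS x -> ~ A x -> (A (mul hi x) <-> A hi) /\ (B (mul hi x) <-> B hi)).
  { intros x Hx nA. destruct (min_nat _ Hx) as [n [Hn Hmin]]. apply (Claim n x Hn Hmin). right; exact nA. }
  destruct (classic (A hi)) as [Ahi|nAhi].
  - apply IB. apply (fin_sub _ _ (LA hi)). intros x [Hx Bx].
    assert (nA : ~ A x) by (intros Ax; exact (Dis x Ax Bx)).
    destruct (Claim' x Hx nA) as [C1 _]. split; [apply C1; exact Ahi | exact nA].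
  - destruct (classic (B hi)) as [Bhi|nBhi].
    + apply IC. apply (fin_sub _ _ (LB hi)). intros x [Hx [nA nB]].
      destruct (Claim' x Hx nA) as [_ C2]. split; [apply C2; exact Bhi | exact nB].
    + apply IB. apply (fin_sub _ _ (LB' hi)). intros x [Hx Bx].
      assert (nA : ~ A x) by (intros Ax; exact (Dis x Ax Bx)).
      destruct (Claim' x Hx nA) as [_ C2]. split; [exact Bx|]. intros B'. apply nBhi, C2, B'.
Qed.

Lemma triv_inv {G : Type} (mul : G -> G -> G) (inv : G -> G) (one : G) (P : G -> Prop) :
  is_group mul inv one -> acts_trivially mul inv P ->
  (forall p, finite_set (fun x => P (mul p x) /\ ~ P x)) /\
  (forall p, finite_set (fun x => P x /\ ~ P (mul p x))).
Proof.
  intros Hg HT. destruct (grp_facts mul inv one Hg) as [II _].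
  split; intros p; apply (fin_sub _ _ (HT (inv p))); intros x Hx; unfold symdiff, translate;
    rewrite II; tauto.
Qed.

Lemma main_lemma {G : Type} (mul : G -> G -> G) (inv : G -> G) (one : G) (d : G -> G -> R)
  (A B E : G -> Prop) :
  is_group mul inv one -> is_metric d -> left_invariant mul d -> proper_metric d ->
  ~ locally_finite mul inv one ->
  NCC d A -> NCC d B -> infinite_set E ->
  (forall x, A x -> B x -> False) -> (forall x, A x -> E x -> False) -> (forall x, B x -> E x -> False) ->
  acts_trivially mul inv A -> acts_trivially mul inv B -> False.
Proof.
  intros Hg Hm Hl Hp Hnlf [cA [iA _]] [cB [iB _]] iE DAB DAE DBE TA TB.
  destruct (H_inf mul inv one Hg Hnlf) as [SS [Hcl Hinf]].
  destruct (bnd_list mul inv one d A SS Hg Hm Hl Hp cA) as [LA HLA].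
  destruct (bnd_list mul inv one d B SS Hg Hm Hl Hp cB) as [LB HLB].
  set (L := LA ++ LB).
  assert (BA : forall x s, In s SS -> ~ In x L -> ~ In (mul x s) L -> (A x <-> A (mul x s))).
  { intros x s Hs H1 H2. apply HLA; auto; intros I; [apply H1|apply H2]; apply in_or_app; left; exact I. }
  assert (BB : forall x s, In s SS -> ~ In x L -> ~ In (mul x s) L -> (B x <-> B (mul x s))).
  { intros x s Hs H1 H2. apply HLB; auto; intros I; [apply H1|apply H2]; apply in_or_app; right; exact I. }
  assert (BC : forall x s, In s SS -> ~ In x L -> ~ In (mul x s) L ->
      ((~ A x /\ ~ B x) <-> (~ A (mul x s) /\ ~ B (mul x s)))).
  { intros x s Hs H1 H2. rewrite (BA x s Hs H1 H2), (BB x s Hs H1 H2). tauto. }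
  destruct (triv_inv mul inv one A Hg TA) as [LA1 LA2].
  destruct (triv_inv mul inv one B Hg TB) as [LB1 LB2].
  assert (LC : forall p, finite_set (fun x => (~ A (mul p x) /\ ~ B (mul p x)) /\ ~ (~ A x /\ ~ B x))).
  { intros p. apply (fin_sub _ _ (fin_union _ _ (LA2 p) (LB2 p))). intros x H.
    destruct (classic (A x)); [left; tauto | right; tauto]. }
  assert (iC : infinite_set (fun x => ~ A x /\ ~ B x)).
  { intros HF. apply iE. apply (fin_sub _ _ HF). intros x Ex. split; intros H; eauto. }
  pose proof (part1 mul inv one SS L A Hg Hcl Hinf BA LA1 iA) as IA.
  pose proof (part1 mul inv one SS L B Hg Hcl Hinf BB LB1 iB) as IB.
  pose proof (part1 mul inv one SS L _ Hg Hcl Hinf BC LC iC) as IC.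
  apply (part2 mul inv one SS L A B Hg DAB BA BB
    (fun k => right_inv mul inv one d A k Hg Hm Hl Hp cA) LA1 LB1 LB2 IA IB IC).
Qed.

Theorem lemma5p9 (G : Type) (mul : G -> G -> G) (inv : G -> G) (one : G)
  (d : G -> G -> R)
  (Hgrp : is_group mul inv one)
  (Hcount : @countable_type G)
  (Hmet : is_metric d)
  (Hleft : left_invariant mul d)
  (Hprop : proper_metric d)
  (Hnlf : ~ locally_finite mul inv one)
  (E1 E2 E3 : G -> Prop)
  (H1 : NCC d E1) (H2 : NCC d E2) (H3 : NCC d E3)
  (D12 : forall x, E1 x -> E2 x -> False)
  (D13 : forall x, E1 x -> E3 x -> False)
  (D23 : forall x, E2 x -> E3 x -> False) :
  ~ (acts_trivially mul inv E1 /\ acts_trivially mul inv E2) /\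
  ~ (acts_trivially mul inv E1 /\ acts_trivially mul inv E3) /\
  ~ (acts_trivially mul inv E2 /\ acts_trivially mul inv E3).
Proof.
  pose proof H1 as [_ [i1 _]]. pose proof H2 as [_ [i2 _]]. pose proof H3 as [_ [i3 _]].
  split; [|split]; intros [T1 T2].
  - apply (main_lemma mul inv one d E1 E2 E3 Hgrp Hmet Hleft Hprop Hnlf H1 H2 i3 D12 D13 D23 T1 T2).
  - apply (main_lemma mul inv one d E1 E3 E2 Hgrp Hmet Hleft Hprop Hnlf H1 H3 i2 D13 D12
      (fun x a b => D23 x b a) T1 T2).
  - apply (main_lemma mul inv one d E2 E3 E1 Hgrp Hmet Hleft Hprop Hnlf H2 H3 i1 D23
      (fun x a b => D12 x b a) (fun x a b => D13 x b a) T1 T2).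
Qed.
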